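(* Let $m\in M^\oplus$, $P=P(m)$, $d\in N^\oplus$ and $\theta\in M_{\mathbb{R}}$. A $P$-framed representation $\nu:P\to E$ of $(Q,I)$ with $d(E)=d$, viewed as a representation of $(Q^\star,I^\star)$ of dimension vector $d^\star$ (with $\mathbb{C}$ at $\star$ and the arrows out of $\star$ given by $\nu$), is $(\theta-\epsilon\delta)^\star$-semistable for all sufficiently small $\epsilon>0$ (i.e. defines a point of $F(d,m,\theta)$) if and only if (a) $E\in\mathcal{F}(\theta)$ and (b) $\mathrm{coker}(\nu)\in\mathcal{T}(\theta)$.
   Context: $Q$ is a quiver with finite vertex set $V(Q)$, $I\subset\mathbb{C}Q$ a two-sided ideal spanned by combinations of paths of length $\ge2$, $\mathcal{A}=\mathrm{rep}(Q,I)$ the finite-dimensional $\mathbb{C}Q/I$-modules. $N=\mathbb{Z}^{V(Q)}$ with basis $(e_i)$, $N^\oplus$ non-negative vectors, $M=\mathrm{Hom}(N,\mathbb{Z})$, $M_{\mathbb{R}}=M\otimes\mathbb{R}$, $\delta\in M$ with $\delta(e_i)=1$, $M^\oplus=\{0\}\cup\{m:m(n)>0$ for all nonzero $n\in N^\oplus\}$. $\theta(E)=\theta(d(E))$ for dimension vectors $d(E)$. $\mathcal{T}(\theta)$ (resp. $\mathcal{F}(\theta)$) is the full subcategory of $E\in\mathcal{A}$ all of whose quotients $Q$ satisfy $\theta(Q)>0$ (resp. all of whose subobjects $A$ satisfy $\theta(A)\le0$). $P_i=(\mathbb{C}Q/I)\epsilon_i$ for the vertex idempotent $\epsilon_i$,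 $P(m)=\bigoplus_iP_i^{m(e_i)}$; a $P$-framed representation is $E\in\mathcal{A}$ with a module map $\nu:P\to E$, which is the same as choosing $m(e_i)$ vectors in $E_i$ for each $i$. $Q^\star$ adds a vertex $\star$ and $m(e_i)$ arrows $\star\to i$; $I^\star$ is generated by $I$. $d^\star=(d,1)\in N\oplus\mathbb{Z}$, and for $\eta\in M_{\mathbb{R}}$, $\eta^\star=(\eta,-\eta(d))$. A representation $E^\star$ of $(Q^\star,I^\star)$ is $\eta^\star$-semistable if $\eta^\star(E^\star)=0$ and every subrepresentation $A^\star$ has $\eta^\star(A^\star)\le0$. $F(d,m,\theta)$ denotes the moduli scheme $M^{ss}(d^\star,(\theta-\epsilon\delta)^\star)$ for $0<\epsilon\ll1$. *)

(* Defs.v *)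
From HB Require Import structures.
From mathcomp Require Import all_boot all_order all_algebra.
From mathcomp Require Import reals.
From mathcomp Require Import complex.

Set Implicit Arguments.
Unset Strict Implicit.
Unset Printing Implicit Defensive.
Import Order.TTheory GRing.Theory Num.Theory.
Local Open Scope ring_scope.

(* Representations of a quiver (vertices V : finType, arrows A with src/tgt)
   over a field C: vertex i carries the row space 'rV[C]_(dv i); an arrow a
   acts by right multiplication with rho a : 'M_(dv (src a), dv (tgt a)). *)
Section QuiverReps.
Variables (C : fieldType) (V : finType) (A : Type) (src tgt : A -> V).

Section Rep.
Variables (dv : V -> nat) (rho : forall a : A, 'M[C]_(dv (src a), dv (tgt a))).

(* subrepresentation: a family of subspaces U i of C^(dv i) (row spaces of
   the square matrices U i) stable under all arrows *)
Definition subrep (U : forall i : V, 'M[C]_(dv i)) : Prop :=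
  forall a : A, (U (src a) *m rho a <= U (tgt a))%MS.

Definition dimsub (U : forall i : V, 'M[C]_(dv i)) : V -> nat :=
  fun i => \rank (U i).

Definition arrow_mx (i k : V) (a : A) : 'M[C]_(dv i, dv k) :=
  \matrix_(x, y)
    (if (src a == i) && (tgt a == k) then
       match (insub (val x) : option 'I_(dv (src a))),
             (insub (val y) : option 'I_(dv (tgt a))) with
       | Some x', Some y' => rho a x' y'
       | _, _ => 0
       end
     else 0).

Definition idpath_mx (i j : V) : 'M[C]_(dv i, dv j) :=
  \matrix_(x, y) ((i == j) && (val x == val y))%:R.

(* action of the path p = [:: a1; ...; an] (a1 traversed first) from i to j *)
Fixpoint path_mx (i j : V) (p : seq A) : 'M[C]_(dv i, dv j) :=
  match p with
  | [::] => idpath_mx i j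
  | a :: p' => \sum_(k : V) arrow_mx i k a *m path_mx k j p'
  end.

(* an element of CQ, as a finite linear combination of paths, annihilates the
   representation *)
Definition kills (r : seq (C * seq A)) : Prop :=
  forall i j : V, \sum_(t <- r) t.1 *: path_mx i j t.2 = 0.

Definition satisfies (I : seq (C * seq A) -> Prop) : Prop :=
  forall r, I r -> kills r.

End Rep.

Definition admissible_rel (I : seq (C * seq A) -> Prop) : Prop :=
  forall r, I r -> all (fun t => 1 < size t.2)%N r.

End QuiverReps.

Section Stability.
Variable R : realType.

Definition pairing (V : finType) (theta : V -> R) (n : V -> nat) : R :=
  \sum_(i : V) theta i * (n i)%:R.

Definition semistable (C : fieldType) (V : finType) (A : Type) (src tgt : A -> V)
  (eta : V -> R) (dv : V -> nat) (rho : forall a, 'M[C]_(dv (src a), dv (tgt a)))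
  : Prop :=
  pairing eta dv = 0 /\
  forall U : forall i, 'M[C]_(dv i),
    subrep rho U -> pairing eta (dimsub U) <= 0.

Definition in_F (C : fieldType) (V : finType) (A : Type) (src tgt : A -> V)
  (theta : V -> R) (dv : V -> nat) (rho : forall a, 'M[C]_(dv (src a), dv (tgt a)))
  : Prop :=
  forall U : forall i, 'M[C]_(dv i),
    subrep rho U -> pairing theta (dimsub U) <= 0.

Definition Mplus (V : finType) (m : V -> int) : Prop :=
  (forall i, m i = 0) \/
  (forall n : V -> nat, (exists i, n i <> 0%N) ->
     0 < \sum_(i : V) m i * (n i)%:Z).

Definition delta (V : finType) : V -> R := fun _ => 1.

End Stability.

Section Framed.
Variables (V : finType) (A : Type) (src tgt : A -> V) (m : V -> int).

(* multiplicity m(e_i) of P_i in P(m) *)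
Definition mult (i : V) : nat := `|m i|%N.

(* arrows of Q^star: those of Q plus m(e_i) arrows star -> i *)
Definition starA : Type := (A + {i : V & 'I_(mult i)})%type.

(* vertices of Q^star: Some i for i in V, None = star *)
Definition srcS (b : starA) : option V :=
  match b with inl a => Some (src a) | inr s => None end.
Definition tgtS (b : starA) : option V :=
  match b with inl a => Some (tgt a) | inr s => Some (projT1 s) end.

Definition dstar (d : V -> nat) (o : option V) : nat :=
  match o with Some i => d i | None => 1%N end.

Definition etastar (R : realType) (eta : V -> R) (d : V -> nat) (o : option V) : R :=
  match o with Some i => eta i | None => - pairing eta d end.

(* E^star: the framed representation nu : P(m) -> E, where nu i is the
   mult i x d i matrix whose rows are the m(e_i) chosen vectors in E_i,
   viewed as a representation of Q^star with C at star *)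
Definition rhostar (C : fieldType) (d : V -> nat)
  (rho : forall a, 'M[C]_(d (src a), d (tgt a)))
  (nu : forall i, 'M[C]_(mult i, d i)) :
  forall b : starA, 'M[C]_(dstar d (srcS b), dstar d (tgtS b)) :=
  fun b => match b as b0 return 'M[C]_(dstar d (srcS b0), dstar d (tgtS b0)) with
           | inl a => rho a
           | inr s => row (projT2 s) (nu (projT1 s))
           end.

(* coker(nu) in T(theta): every nonzero quotient of coker(nu) has theta > 0.
   Quotients of coker(nu) = E / im(nu) are the E / W for subrepresentations
   W of E containing im(nu), i.e. containing all framing vectors; the quotient
   is nonzero iff W <> E, and d(E/W) = d - d(W). *)
Definition coker_in_T (C : fieldType) (R : realType) (theta : V -> R)
  (d : V -> nat) (rho : forall a, 'M[C]_(d (src a), d (tgt a)))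
  (nu : forall i, 'M[C]_(mult i, d i)) : Prop :=
  forall W : forall i, 'M[C]_(d i),
    subrep rho W ->
    (forall i, (nu i <= W i)%MS) ->
    (exists i, \rank (W i) <> d i) ->
    0 < pairing theta (fun i => (d i - \rank (W i))%N).

End Framed.

(* Main.v *)
Require Import Defs.
From HB Require Import structures.
From mathcomp Require Import all_boot all_order all_algebra.
From mathcomp Require Import reals.
From mathcomp Require Import complex.
From mathcomp Require Import lra.
Import Order.TTheory GRing.Theory Num.Theory.
Local Open Scope ring_scope.
Local Open Scope complex_scope.

Lemma big_opt (R : nmodType) (V : finType) (f : option V -> R) :
  \sum_(o : option V) f o = f None + \sum_(i : V) f (Some i).
Proof.
rewrite (bigD1 None) //=; congr (_ + _).
rewrite (reindex_omap Some id) //=; last by case.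
by apply: eq_bigl => i; rewrite eqxx.
Qed.

Lemma pairing_star (R : realType) (V : finType) (eta : V -> R) (d : V -> nat)
  (n : option V -> nat) :
  pairing (etastar eta d) n = - pairing eta d * (n None)%:R
                              + pairing eta (fun i => n (Some i)).
Proof. by rewrite /pairing big_opt. Qed.

Lemma pairing_sub (R : realType) (V : finType) (theta : V -> R) (eps : R)
  (n : V -> nat) :
  pairing (fun j => theta j - eps * delta R j) n =
  pairing theta n - eps * \sum_i (n i)%:R.
Proof.
rewrite /pairing /delta mulr_sumr -sumrB; apply: eq_bigr => i _.
by rewrite mulr1 mulrBl.
Qed.

Lemma pairingB (R : realType) (V : finType) (eta : V -> R) (d n : V -> nat) :
  (forall i, n i <= d i)%N ->
  pairing eta d - pairing eta n = pairing eta (fun i => d i - n i)%N.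
Proof.
move=> h; rewrite /pairing -sumrB; apply: eq_bigr => i _.
by rewrite natrB // mulrBr.
Qed.

Lemma sum_ge0 (R : realType) (V : finType) (n : V -> nat) :
  0 <= \sum_i (n i)%:R :> R.
Proof. by apply: sumr_ge0 => i _; rewrite ler0n. Qed.

Lemma seq_min (R : realType) (s : seq R) :
  exists mu, 0 < mu /\ forall x, x \in s -> 0 < x -> mu <= x.
Proof.
elim: s => [|x s [mu [mu0 H]]]; first by exists 1.
case: (ltrP 0 x) => hx.
- exists (Num.min mu x); split; first by rewrite lt_min mu0 hx.
  move=> y; rewrite in_cons => /orP [/eqP -> _|ys y0]; first by rewrite ge_min lexx orbT.
  by rewrite ge_min H.
- exists mu; split => // y; rewrite in_cons => /orP [/eqP -> y0|ys y0].
    by exfalso; lra.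
  exact: H.
Qed.

Lemma fin_min (R : realType) (V : finType) (theta : V -> R) (d : V -> nat) :
  exists mu, 0 < mu /\ forall n : V -> nat, (forall i, n i <= d i)%N ->
    0 < pairing theta n -> mu <= pairing theta n.
Proof.
pose D := (\max_i d i)%N.
have [mu [mu0 H]] := @seq_min R
  [seq pairing theta (fun i => nat_of_ord (f i)) | f : {ffun V -> 'I_D.+1} <- enum {ffun V -> 'I_D.+1}].
exists mu; split => // n hn hp.
pose f : {ffun V -> 'I_D.+1} := [ffun i => inord (n i)].
have E : pairing theta n = pairing theta (fun i => nat_of_ord (f i)).
  rewrite /pairing; apply: eq_bigr => i _; rewrite /f ffunE inordK //.
  rewrite ltnS; apply: leq_trans (hn i) _; exact: (leq_bigmax i).
rewrite E; apply: H; last by rewrite -E.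
by apply: (map_f (fun f : {ffun V -> 'I_D.+1} => _)); rewrite mem_enum.
Qed.

Lemma small_le (R : realType) (e0 x k : R) : 0 < e0 -> 0 <= k ->
  (forall eps, 0 < eps -> eps < e0 -> x <= eps * k) -> x <= 0.
Proof.
move=> e0p k0 H; rewrite leNgt; apply/negP => xp.
pose eps := Num.min (e0 / 2) (x / (k + 1)).
have ep : 0 < eps by rewrite lt_min divr_gt0 // ?divr_gt0 //; lra.
have ee : eps < e0 by rewrite gt_min; apply/orP; left; lra.
have h1 : eps <= x / (k + 1) by rewrite ge_min lexx orbT.
have := H eps ep ee.
have : eps * k <= x / (k + 1) * k by rewrite ler_wpM2r.
have : x / (k + 1) * k < x.
  rewrite mulrAC ltr_pdivrMr; last lra.
  rewrite mulrDr mulr1; lra.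
lra.
Qed.

Theorem mainTheorem12 (R : realType) (V : finType) (A : Type) (src tgt : A -> V)
  (I : seq (R[i] * seq A) -> Prop) (hI : admissible_rel I)
  (m : V -> int) (hm : Mplus m) (d : V -> nat) (theta : V -> R)
  (rho : forall a : A, 'M[R[i]]_(d (src a), d (tgt a)))
  (hE : satisfies rho I)
  (nu : forall i : V, 'M[R[i]]_(mult m i, d i)) :
  (exists eps0 : R, 0 < eps0 /\
     forall eps : R, 0 < eps -> eps < eps0 ->
       semistable (etastar (fun j => theta j - eps * delta R j) d)
                  (rhostar rho nu))
  <-> (in_F theta rho /\ coker_in_T theta rho nu).
Proof.
split.
- move=> [e0 [e0p H]]; split.
  + move=> U hU.
    apply: (@small_le R e0 (pairing theta (dimsub U)) _ e0p (@sum_ge0 R V (dimsub U))) => eps h1 h2.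
    have [_ Hs] := H eps h1 h2.
    pose U' : forall o, 'M[R[i]]_(dstar d o) :=
      fun o => match o with Some i => U i | None => 0 end.
    have hsub : subrep (rhostar rho nu) U'.
      by case => [a|[i k]] /=; [exact: hU a | rewrite mul0mx sub0mx].
    have := Hs U' hsub.
    rewrite pairing_star /dimsub /= mxrank0 mulr0 add0r pairing_sub.
    move=> h; lra.
  + move=> W hW hnu [i0 hi0].
    have e2p : 0 < e0 / 2 by rewrite divr_gt0.
    have e2l : e0 / 2 < e0 by lra.
    have [_ Hs] := H _ e2p e2l.
    pose U' : forall o, 'M[R[i]]_(dstar d o) :=
      fun o => match o with Some i => W i | None => 1%:M end.
    have hsub : subrep (rhostar rho nu) U'.
      case => [a|[i k]] /=; first exact: hW a.
      by rewrite mul1mx; apply: submx_trans (row_sub k (nu i)) (hnu i).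
    have := Hs U' hsub.
    rewrite pairing_star /dimsub /= mxrank1 mulr1.
    have hle : forall i, (\rank (W i) <= d i)%N by move=> i; exact: rank_leq_col.
    move=> h.
    have h' : 0 <= pairing (fun j => theta j - e0 / 2 * delta R j) d
                   - pairing (fun j => theta j - e0 / 2 * delta R j) (fun i => \rank (W i)).
      lra.
    move: h'; rewrite pairingB // pairing_sub => h'.
    have sp : 0 < \sum_i ((d i - \rank (W i))%N)%:R :> R.
      rewrite (bigD1 i0) //=.
      have a1 : 0 < ((d i0 - \rank (W i0))%N)%:R :> R.
        rewrite ltr0n subn_gt0 ltn_neqAle hle andbT; exact/eqP.
      have a2 : 0 <= \sum_(i | i != i0) ((d i - \rank (W i))%N)%:R :> R.
        by apply: sumr_ge0 => i _; rewrite ler0n.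
      lra.
    have : 0 < e0 / 2 * \sum_i ((d i - \rank (W i))%N)%:R by rewrite mulr_gt0.
    lra.
- move=> [hF hT].
  have [mu [mu0 Hmu]] := @fin_min R V theta d.
  have Sd0 := @sum_ge0 R V d.
  set Sd := \sum_i (d i)%:R in Sd0.
  have Sd1 : 0 < Sd + 1 by lra.
  exists (mu / (Sd + 1)); split; first by rewrite divr_gt0.
  move=> eps h1 h2; split.
    rewrite pairing_star /=; lra.
  move=> U hU.
  have hU' : subrep rho (fun i => U (Some i)) by move=> a; exact: (hU (inl a)).
  rewrite pairing_star /dimsub /=.
  have hle : forall i, (\rank (U (Some i)) <= d i)%N by move=> i; exact: rank_leq_col.
  have : (\rank (U None) <= 1)%N by exact: rank_leq_col.
  rewrite leq_eqVlt ltnS leqn0 => /orP [/eqP r1 | /eqP r0].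
  + rewrite r1 mulr1.
    have hnu : forall i, (nu i <= U (Some i))%MS.
      move=> i; apply/row_subP => k.
      have := hU (inr (existT _ i k)); rewrite /=.
      have full : row_full (U None) by rewrite /row_full r1.
      move=> hk; apply: submx_trans hk.
      by rewrite -{1}(mul1mx (row k (nu i))) submxMr // submx_full.
    suff : 0 <= pairing (fun j => theta j - eps * delta R j) d
                - pairing (fun j => theta j - eps * delta R j) (fun i => \rank (U (Some i))).
      lra.
    rewrite pairingB // pairing_sub.
    have [/existsP [i0 hi0] | hall] := boolP [exists i, \rank (U (Some i)) != d i].
    * have hp := hT _ hU' hnu (ex_intro _ i0 (elimN eqP hi0)).
      have hm' := Hmu _ (fun i => leq_subr _ _) hp.
      have hs : \sum_i ((d i - \rank (U (Some i)))%N)%:R <= Sd :> R.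
        by apply: ler_sum => i _; rewrite ler_nat leq_subr.
      have hs0 := @sum_ge0 R V (fun i => (d i - \rank (U (Some i)))%N).
      have : eps * (Sd + 1) < mu.
        by rewrite -ltr_pdivlMr.
      have : eps * \sum_i ((d i - \rank (U (Some i)))%N)%:R <= eps * Sd.
        by rewrite ler_wpM2l // ltW.
      move: hs0; rewrite /= => hs0.
      nra.
    * have z : forall i, (d i - \rank (U (Some i)))%N = 0%N.
        move=> i; move: hall; rewrite negb_exists => /forallP /(_ i).
        by rewrite negbK => /eqP ->; rewrite subnn.
      rewrite /pairing !big1 ?mulr0 ?subrr // => i _; by rewrite z ?mulr0.
  + rewrite r0 mulr0 add0r pairing_sub.
    have := hF _ hU'; rewrite /dimsub => h.
    have := @sum_ge0 R V (fun i => \rank (U (Some i))).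
    move=> hs; have : 0 <= eps * \sum_i (\rank (U (Some i)))%:R by rewrite mulr_ge0 // ltW.
    lra.
Qed.
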